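(* Let $r\ge2$ and $R=\{1,2,r+1,r+2\}$. Then for all $n,k\ge1$, the number $L(n,k)^{-1}_R$ is either $0$ or has sign $(-1)^{n-k}$, i.e. $(-1)^{n-k}L(n,k)^{-1}_R\ge0$. Equivalently, the compositional inverse of $x+x^2+x^{r+1}+x^{r+2}$ has coefficient of $x^n$ of sign $(-1)^{n-1}$ or $0$ for every $n\ge1$.
   Context: For $R\subseteq\mathbb N$, $L(n,k)_R$ is the number of partitions of $[n]$ into $k$ lists (linearly ordered nonempty blocks) each of size in $R$, and $L(n,k)^{-1}_R$ is the $(n,k)$ entry of the inverse of the infinite lower-triangular matrix $[L(n,k)_R]_{n,k\ge1}$ (rows indexed by $n$). *)

(* Defs.v *)
From HB Require Import structures.
From mathcomp Require Import all_boot all_order all_algebra.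
Set Implicit Arguments. Unset Strict Implicit. Unset Printing Implicit Defensive.
Import Order.TTheory GRing.Theory Num.Theory.

(* A list (linearly ordered nonempty block) with entries in [n] = 'I_n is
   encoded by its "graph" X = {(a_0,0), (a_1,1), ..., (a_{j-1},j-1)}:
   each element occurs at most once, and the positions used are exactly
   0, ..., #|X|-1.  Nonemptiness: 0 < #|X|. *)
Definition is_list_on (n : nat) (X : {set 'I_n * 'I_n}) : bool :=
  [&& 0 < #|X|,
      [forall x : 'I_n, #|[set i : 'I_n | (x, i) \in X]| <= 1] &
      [forall i : 'I_n, (val i < #|X|) == [exists x : 'I_n, (x, i) \in X]]].

Definition list_partitions (R : pred nat) (n k : nat)
  : {set {set {set 'I_n * 'I_n}}} :=
  [set P : {set {set 'I_n * 'I_n}} |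
    [&& #|P| == k,
        [forall X in P, is_list_on X && R #|X|] &
        [forall x : 'I_n,
           #|[set X in P | [exists i : 'I_n, (x, i) \in X]]| == 1]]].

Definition Lnk (R : pred nat) (n k : nat) : nat := #|list_partitions R n k|.

Definition Lmat (R : pred nat) (m : nat) : 'M[rat]_m.+1 :=
  \matrix_(i < m.+1, j < m.+1) ((Lnk R i.+1 j.+1)%:R : rat).

(* L(n,k)^{-1}_R: (n,k) entry of the inverse of the infinite lower-triangular
   matrix; since the matrix is lower triangular, this is the (n,k) entry of
   the inverse of its n x n leading truncation (0 above the diagonal). *)
Definition Linv (R : pred nat) (n k : nat) : rat :=
  if (0 < k <= n)%N then invmx (Lmat R n.-1) (inord n.-1) (inord k.-1)
  else 0%R.

Definition Rset (r : nat) : pred nat := fun j => j \in [:: 1; 2; r.+1; r.+2]%N.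

(* Main.v *)
Require Import Defs.
From HB Require Import structures.
From mathcomp Require Import all_boot all_order all_algebra.
From mathcomp Require Import ring zify.
Import Order.TTheory GRing.Theory Num.Theory.

Module AlgM.
Local Open Scope ring_scope.

Definition eqm (m : nat) (p q : {poly rat}) := exists s, p - q = s * 'X^m.

Lemma eqm_refl m p : eqm m p p.
Proof. by exists 0; rewrite subrr mul0r. Qed.
Lemma eqm_sym m p q : eqm m p q -> eqm m q p.
Proof. by case=> s hs; exists (-s); rewrite mulNr -hs opprB. Qed.
Lemma eqm_trans m p q u : eqm m p q -> eqm m q u -> eqm m p u.
Proof. case=> s hs [t ht]; exists (s + t); rewrite mulrDl -hs -ht; ring. Qed.
Lemma eqm_add m p q p' q' : eqm m p q -> eqm m p' q' -> eqm m (p + p') (q + q').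
Proof. case=> s hs [t ht]; exists (s + t); rewrite mulrDl -hs -ht; ring. Qed.
Lemma eqm_mul m p q p' q' : eqm m p q -> eqm m p' q' -> eqm m (p * p') (q * q').
Proof.
case=> s hs [t ht]; exists (s * p' + q * t).
have -> : p = q + s * 'X^m by rewrite -hs; ring.
have -> : p' = q' + t * 'X^m by rewrite -ht; ring.
ring.
Qed.
Lemma eqm_opp m p q : eqm m p q -> eqm m (- p) (- q).
Proof. by case=> s hs; exists (-s); rewrite mulNr -hs; ring. Qed.
Lemma eqm_exp m p q k : eqm m p q -> eqm m (p ^+ k) (q ^+ k).
Proof.
move=> h; elim: k => [|k IH]; first exact: eqm_refl.
by rewrite !exprS; apply: eqm_mul.
Qed.
Lemma eqm_sum m K (F G : nat -> {poly rat}) :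
  (forall i, eqm m (F i) (G i)) -> eqm m (\sum_(i < K) F i) (\sum_(i < K) G i).
Proof.
move=> h; elim: K => [|K IH]; first by rewrite !big_ord0; apply: eqm_refl.
by rewrite !big_ord_recr /=; apply: eqm_add.
Qed.
Lemma eqm_coef m p q i : eqm m p q -> (i < m)%N -> p`_i = q`_i.
Proof.
case=> s hs lt; apply/eqP; rewrite -subr_eq0 -coefB hs coefMXn lt //.
Qed.
Lemma eqm_scale m p q (c : rat) : eqm m p q -> eqm m (c *: p) (c *: q).
Proof. by case=> s hs; exists (c *: s); rewrite -scalerBr hs scalerAl. Qed.
Lemma eqm_le m m' p q : (m' <= m)%N -> eqm m p q -> eqm m' p q.
Proof.
move=> le [s hs]; exists (s * 'X^(m - m')); rewrite hs -mulrA -exprD subnK //.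
Qed.

Definition nnC (p : {poly rat}) := forall i, 0 <= (-1) ^+ i * p`_i.

Lemma nnC1 : nnC 1.
Proof. move=> [|i]; rewrite coefC /=; first by rewrite mul1r. by rewrite mulr0. Qed.
Lemma nnCD p q : nnC p -> nnC q -> nnC (p + q).
Proof. by move=> hp hq i; rewrite coefD mulrDr addr_ge0. Qed.
Lemma nnCZ (c : rat) p : 0 <= c -> nnC p -> nnC (c *: p).
Proof. by move=> hc hp i; rewrite coefZ mulrCA mulr_ge0. Qed.
Lemma nnCM p q : nnC p -> nnC q -> nnC (p * q).
Proof.
move=> hp hq i; rewrite coefM mulr_sumr; apply: sumr_ge0 => j _.
have -> : (-1) ^+ i = ((-1) ^+ j * (-1) ^+ (i - j)) :> rat.
  by rewrite -exprD subnKC // -ltnS.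
rewrite mulrACA; exact: mulr_ge0.
Qed.
Lemma nnCX p k : nnC p -> nnC (p ^+ k).
Proof. by move=> h; elim: k => [|k IH]; [exact: nnC1 | rewrite exprS; apply: nnCM]. Qed.
Lemma nnC_sum K (F : nat -> {poly rat}) : (forall i, nnC (F i)) -> nnC (\sum_(i < K) F i).
Proof.
move=> h; elim: K => [|K IH]; first by rewrite big_ord0 => i; rewrite coef0 mulr0.
by rewrite big_ord_recr; apply: nnCD.
Qed.
Lemma nnC_negX p : nnC p -> nnC (- ('X * p)).
Proof.
move=> h [|i]; first by rewrite coefN coefXM /= oppr0 mulr0.
by rewrite coefN coefXM /= exprS mulN1r mulrNN.
Qed.

Lemma nnC0 : nnC 0.
Proof. by move=> i; rewrite coef0 mulr0. Qed.

Section Construct.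
Variables (r K : nat).
Let c : rat := (-1) ^+ r.

Definition Phi (e : {poly rat}) : {poly rat} :=
  (\sum_(i < r) e ^+ i + (1 - c)%:P * (e ^+ r * \sum_(i < K) e ^+ i))
  * \sum_(m < K) (e ^+ r * e ^+ r) ^+ m.

Lemma c_le1 : c <= 1.
Proof. by rewrite /c -signr_odd; case: (odd r); rewrite ?expr1 ?expr0 // lerN10. Qed.
Lemma c_sq : c * c = 1.
Proof. by rewrite /c -exprD -signr_odd addnn odd_double. Qed.

Lemma nnC_Phi e : nnC e -> nnC (Phi e).
Proof.
move=> he; apply: nnCM; last by apply: nnC_sum => i; apply: nnCX; apply: nnCM; apply: nnCX.
apply: nnCD; first by apply: nnC_sum => i; apply: nnCX.
rewrite mul_polyC; apply: nnCZ; first by rewrite subr_ge0 c_le1.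
apply: nnCM; [exact: nnCX | by apply: nnC_sum => i; apply: nnCX].
Qed.

Lemma eqm_Phi m a b : eqm m a b -> eqm m (Phi a) (Phi b).
Proof.
move=> h; apply: eqm_mul; last by apply: eqm_sum => i; apply: eqm_exp; apply: eqm_mul; apply: eqm_exp.
apply: eqm_add; first by apply: eqm_sum => i; apply: eqm_exp.
apply: eqm_mul; first exact: eqm_refl.
apply: eqm_mul; first exact: eqm_exp.
by apply: eqm_sum => i; apply: eqm_exp.
Qed.

Lemma geom (x : {poly rat}) n : (1 - x) * \sum_(i < n) x ^+ i = 1 - x ^+ n.
Proof. by rewrite -opprB mulNr -subrX1 opprB. Qed.

Hypothesis rpos : (0 < r)%N.

Lemma Phi_id e : exists W, (1 - e) * (1 + c%:P * e ^+ r) * Phi e = 1 - e ^+ K * W.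
Proof.
set A := \sum_(i < r) e ^+ i; set B := \sum_(i < K) e ^+ i.
set Cs := \sum_(m < K) (e ^+ r * e ^+ r) ^+ m.
have hA : (1 - e) * A = 1 - e ^+ r by apply: geom.
have hB : (1 - e) * B = 1 - e ^+ K by apply: geom.
have hC : (1 - e ^+ r * e ^+ r) * Cs = 1 - (e ^+ r * e ^+ r) ^+ K by apply: geom.
have hc : c%:P * c%:P = 1 :> {poly rat} by rewrite -polyCM c_sq.
have hW : (e ^+ r * e ^+ r) ^+ K = e ^+ K * (e ^+ r.-1 * e ^+ r) ^+ K.
  rewrite {1}(_ : e ^+ r = e * e ^+ r.-1); last by rewrite -exprS prednK.
  by rewrite -mulrA exprMn.
exists ((e ^+ r.-1 * e ^+ r) ^+ K + (1 + c%:P * e ^+ r) * (1 - c%:P) * e ^+ r * Cs).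
rewrite /Phi -/A -/B -/Cs polyCB.
have -> : (1 - e) * (1 + c%:P * e ^+ r) * ((A + (1 - c%:P) * (e ^+ r * B)) * Cs)
  = (1 + c%:P * e ^+ r) * ((1 - e) * A + (1 - c%:P) * (e ^+ r * ((1 - e) * B))) * Cs by ring.
rewrite hA hB.
have -> : (1 + c%:P * e ^+ r) * (1 - e ^+ r + (1 - c%:P) * (e ^+ r * (1 - e ^+ K))) * Cs
  = (1 - (c%:P * c%:P) * (e ^+ r * e ^+ r)) * Cs
    - (1 + c%:P * e ^+ r) * (1 - c%:P) * e ^+ r * e ^+ K * Cs by ring.
rewrite hc mul1r hC hW; ring.
Qed.
End Construct.

Lemma eqm_X m a b : eqm m a b -> eqm m.+1 ('X * a) ('X * b).
Proof. by case=> s hs; exists s; rewrite -mulrBr hs exprS; ring. Qed.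

Fixpoint Gi (r K j : nat) : {poly rat} :=
  if j is j'.+1 then 'X * Phi r K (- Gi r K j') else 0.

Lemma Gi_nn r K j : nnC (- Gi r K j).
Proof.
elim: j => [|j IH] /=; first by rewrite oppr0; exact: nnC0.
by apply: nnC_negX; apply: nnC_Phi.
Qed.

Lemma Gi_conv r K j : eqm j (Gi r K j.+1) (Gi r K j).
Proof.
elim: j => [|j IH]; first by exists (Gi r K 1 - Gi r K 0); rewrite expr0 mulr1.
rewrite [Gi r K j.+2]/= [Gi r K j.+1]/=; apply: eqm_X; apply: eqm_Phi.
exact: eqm_opp.
Qed.

Lemma Gi_X r K j : eqm 1 (Gi r K j) 0.
Proof.
case: j => [|j]; first exact: eqm_refl.
by exists (Phi r K (- Gi r K j)); rewrite subr0 expr1 mulrC.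
Qed.

Lemma exists_g (r M : nat) : (0 < r)%N -> exists g : {poly rat},
  [/\ nnC (- g), eqm 1 g 0 & eqm M (g + g ^+ 2 + g ^+ r.+1 + g ^+ r.+2) 'X].
Proof.
move=> rpos; set g := Gi r M.+1 M.+1.
exists g; split; [exact: Gi_nn | exact: Gi_X |].
have h1 : eqm M.+1 g ('X * Phi r M.+1 (- g)) by apply: eqm_sym; apply: (Gi_conv r M.+1 M.+1).
have [W hW] := Phi_id r M.+1 rpos (- g).
have hgr : g ^+ r = ((-1) ^+ r)%:P * (- g) ^+ r.
  by rewrite -{1}(opprK g) [LHS]exprNn polyC_exp polyCN polyC1.
have e1 : g + g ^+ 2 + g ^+ r.+1 + g ^+ r.+2 = g * ((1 - (- g)) * (1 + ((-1) ^+ r)%:P * (- g) ^+ r)).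
  by rewrite -hgr opprK !exprS; ring.
rewrite e1; apply: (@eqm_le M.+1) => //.
apply: (@eqm_trans _ _ (('X * Phi r M.+1 (- g)) * ((1 - - g) * (1 + ((-1) ^+ r)%:P * (- g) ^+ r)))).
  by apply: eqm_mul; [exact: h1 | apply: eqm_refl].
have -> : 'X * Phi r M.+1 (- g) * ((1 - - g) * (1 + ((-1) ^+ r)%:P * (- g) ^+ r))
   = 'X * ((1 - - g) * (1 + ((-1) ^+ r)%:P * (- g) ^+ r) * Phi r M.+1 (- g)) by ring.
rewrite hW.
have [s hs] := Gi_X r M.+1 M.+1; rewrite -/g subr0 expr1 in hs.
exists (- ((- s) ^+ M.+1 * W * 'X)); rewrite hs (_ : - (s * 'X) = (- s) * 'X); last by rewrite mulNr.
rewrite exprMn.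
set a := (- s) ^+ M.+1; set b := 'X ^+ M.+1; ring.
Qed.

End AlgM.
Import AlgM.

Module CombM.
Set Implicit Arguments. Unset Strict Implicit. Unset Printing Implicit Defensive.

Section Comb.
Variable n : nat.
Local Notation T := ('I_n * 'I_n)%type.

Definition islist' (X : {set T}) : bool :=
  [forall x : 'I_n, #|[set i : 'I_n | (x, i) \in X]| <= 1] &&
  [forall i : 'I_n, (val i < #|X|) == [exists x : 'I_n, (x, i) \in X]].

Lemma is_list_onE X : is_list_on X = (0 < #|X|) && islist' X.
Proof. by []. Qed.

Definition elems (X : {set T}) : {set 'I_n} := [set p.1 | p in X].

Lemma in_elems X y : (y \in elems X) = [exists i, (y, i) \in X].
Proof.
apply/imsetP/existsP => [[[a i] h /= ->]|[i h]]; first by exists i.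
by exists (y, i).
Qed.

Lemma elem_uniq X a i i' : islist' X -> (a, i) \in X -> (a, i') \in X -> i = i'.
Proof.
case/andP => /forallP /(_ a) /card_le1_eqP h _ h1 h2.
by apply: h; rewrite inE.
Qed.

Lemma card_elems X : islist' X -> #|elems X| = #|X|.
Proof.
move=> hX; apply: card_in_imset => [[a i] [b j]] h1 h2 /= e.
by rewrite e in h1 *; rewrite (elem_uniq hX h1 h2).
Qed.

Lemma card_list_le X : islist' X -> #|X| <= n.
Proof. by move=> hX; rewrite -card_elems //; apply: leq_trans (max_card _) _; rewrite card_ord. Qed.

Lemma card_lt m : m <= n -> #|[set i : 'I_n | val i < m]| = m.
Proof.
move=> hmn.
have -> : [set i : 'I_n | val i < m] = [set widen_ord hmn j | j in 'I_m].
  apply/setP => i; rewrite inE; apply/idP/imsetP => [hi|[j _ ->]] /=; last exact: ltn_ord.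
  by exists (Ordinal hi) => //; apply: val_inj.
rewrite card_imset; first by rewrite card_ord.
by move=> a b /(congr1 val) /= e; apply: val_inj.
Qed.

Lemma pos_uniq X a b i : islist' X -> (a, i) \in X -> (b, i) \in X -> a = b.
Proof.
move=> hX h1 h2.
have e : [set p.2 | p in X] = [set i : 'I_n | val i < #|X|].
  case/andP: hX => _ /forallP hpos.
  apply/setP => j; rewrite inE (eqP (hpos j)).
  apply/imsetP/existsP => [[[c l] h /= ->]|[c h]]; first by exists c.
  by exists (c, j).
have : #|[set p.2 | p in X]| == #|X| by rewrite e card_lt // card_list_le.
by move/imset_injP => inj; have := inj _ _ h1 h2 erefl; case.
Qed.


Definition lst (S : {set 'I_n}) j :=
  [set X : {set T} | [&& islist' X, #|X| == j & elems X \subset S]].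

Lemma rem_last X x (p : 'I_n) : islist' X -> #|X| = (val p).+1 -> (x, p) \in X ->
  [&& islist' (X :\ (x, p)), #|X :\ (x, p)| == val p & elems (X :\ (x, p)) \subset elems X :\ x].
Proof.
move=> hX hc hxp; have hX' := hX; case/andP: hX' => /forallP hA /forallP hB.
have hc' : #|X :\ (x, p)| = val p by move: hc; rewrite (cardsD1 (x, p)) hxp add1n => -[].
rewrite hc' eqxx /=; apply/andP; split; last first.
  apply/subsetP => y /imsetP [[a i] /setD1P [ne hin] /= ->].
  rewrite !inE; apply/andP; split; last by apply/imsetP; exists (a, i).
  apply/eqP => eax; rewrite eax in ne hin; move: ne; rewrite (elem_uniq hX hin hxp) eqxx //.
apply/andP; split; apply/forallP.
  move=> y; apply: leq_trans (hA y); apply: subset_leq_card; apply/subsetP => i.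
  by rewrite !inE => /andP [].
move=> i; rewrite hc'; case: (ltnP (val i) (val p)) => hi.
  have := hB i; rewrite hc ltnS (ltnW hi) eq_sym => /eqP/existsP [y hy].
  rewrite eq_sym eqb_id; apply/existsP; exists y; rewrite !inE hy andbT.
  by apply/eqP => -[_ e]; rewrite e ltnn in hi.
rewrite eq_sym eqbF_neg; apply/negP => /existsP [y]; rewrite !inE => /andP [ne hy].
have : val i < #|X| by rewrite (eqP (hB i)); apply/existsP; exists y.
rewrite hc ltnS => hi'; have eip : i = p by apply: val_inj; apply/eqP; rewrite eqn_leq hi hi'.
rewrite eip in ne hy; move: ne; rewrite (pos_uniq hX hy hxp) eqxx //.
Qed.

Lemma add_last X x (p : 'I_n) : islist' X -> #|X| = val p -> x \notin elems X ->
  [&& islist' ((x, p) |: X), #|(x, p) |: X| == (val p).+1 & elems ((x, p) |: X) == x |: elems X].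
Proof.
move=> hX hc hx; have hX' := hX; case/andP: hX' => /forallP hA /forallP hB.
have hxp : (x, p) \notin X by apply: contra hx => h; apply/imsetP; exists (x, p).
have hc' : #|(x, p) |: X| = (val p).+1 by rewrite cardsU1 hxp hc.
rewrite hc' eqxx /= /elems imsetU1 /= eqxx andbT; apply/andP; split; apply/forallP.
  move=> y; apply/card_le1_eqP => i1 i2; rewrite !inE => h1 h2.
  case: (eqVneq y x) => [eyx|nyx].
    rewrite eyx in h1 h2.
    have hh : forall i, ((x, i) == (x, p)) || ((x, i) \in X) -> i = p.
      move=> i /orP [/eqP [->] //|hi].
      by case/negP: hx; apply/imsetP; exists (x, i).
    by rewrite (hh _ h1) (hh _ h2).
  have hh : forall i, ((y, i) == (x, p)) || ((y, i) \in X) -> (y, i) \in X.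
    move=> i /orP [/eqP [e _]|//]; by rewrite e eqxx in nyx.
  by rewrite (elem_uniq hX (hh _ h1) (hh _ h2)).
move=> i; rewrite hc'; case: (eqVneq i p) => [->|nip].
  by rewrite ltnSn eq_sym eqb_id; apply/existsP; exists x; rewrite !inE eqxx.
case: (ltnP (val i) (val p)) => hi.
  rewrite ltnS (ltnW hi); have := hB i; rewrite hc hi eq_sym => /eqP/existsP [y hy].
  by rewrite eq_sym eqb_id; apply/existsP; exists y; rewrite !inE hy orbT.
have -> : val i < (val p).+1 = false.
  by apply/negbTE; rewrite -leqNgt ltn_neqAle hi andbT; apply: contra nip => /eqP/val_inj ->.
rewrite eq_sym eqbF_neg; apply/negP => /existsP [y]; rewrite !inE => /orP [/eqP [_ e]|hy].
  by rewrite e eqxx in nip.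
have : val i < #|X| by rewrite (eqP (hB i)); apply/existsP; exists y.
by rewrite hc ltnNge hi.
Qed.


Lemma sum_bool_card (I : finType) (A : {pred I}) (b : pred I) :
  (\sum_(i in A) (b i : nat))%N = #|[set i in A | b i]|.
Proof.
rewrite -sum1_card big_mkcond [RHS]big_mkcond /=; apply: eq_bigr => i _.
by rewrite !inE; case: (i \in A); case: (b i).
Qed.

Lemma lst_fiber (S : {set 'I_n}) x (p : 'I_n) : x \in S ->
  #|[set X in lst S (val p).+1 | (x, p) \in X]| = #|lst (S :\ x) (val p)|.
Proof.
move=> xS; set A := [set X in _ | _].
rewrite -(@card_in_imset _ _ (fun X => X :\ (x, p)) A); last first.
  move=> X1 X2; rewrite !inE => /andP [_ h1] /andP [_ h2] e.
  by rewrite -(setD1K h1) -(setD1K h2) e.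
apply: eq_card => X'; apply/imsetP/idP => [[X]|hX'].
  rewrite !inE => /andP [/and3P [hX /eqP hc hsub] hxp] ->.
  case/and3P: (rem_last hX hc hxp) => -> -> hsub' /=.
  apply: subset_trans hsub' _; exact: setSD.
move: hX'; rewrite !inE => /and3P [hX' /eqP hc hsub].
have hx : x \notin elems X' by apply/negP => /(subsetP hsub); rewrite !inE eqxx.
case/and3P: (add_last hX' hc hx) => h1 h2 /eqP h3.
exists ((x, p) |: X'); last first.
  rewrite setU1K //; apply: contra hx => h; apply/imsetP; exists (x, p) => //.
rewrite /A !inE h1 h2 h3 eqxx /= ?andbT; apply/subsetP => y; rewrite !inE.
by case/orP => [/eqP -> //|/(subsetP hsub)]; rewrite !inE => /andP [].
Qed.

Lemma lst_split (S : {set 'I_n}) (p : 'I_n) :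
  #|lst S (val p).+1| = (\sum_(x in S) #|[set X in lst S (val p).+1 | (x, p) \in X]|)%N.
Proof.
rewrite -sum1_card.
transitivity (\sum_(X in lst S (val p).+1) \sum_(x in S) (((x, p) \in X) : nat))%N.
  apply: eq_bigr => X; rewrite inE => /and3P [hX /eqP hc hsub].
  rewrite sum_bool_card; apply/esym/eqP; rewrite eqn_leq; apply/andP; split.
    apply/card_le1_eqP => a b; rewrite !inE => /andP [_ ha] /andP [_ hb].
    by rewrite (pos_uniq hX ha hb).
  rewrite card_gt0; apply/set0Pn.
  case/andP: hX => _ /forallP /(_ p); rewrite hc ltnSn eq_sym eqb_id => /existsP [y hy].
  exists y; rewrite !inE hy andbT; apply: (subsetP hsub); by apply/imsetP; exists (y, p).
rewrite exchange_big /=; apply: eq_bigr => x _; rewrite sum_bool_card.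
by apply: eq_card => X; rewrite !inE.
Qed.

Lemma card_lst (S : {set 'I_n}) j : #|lst S j| = #|S| ^_ j.
Proof.
elim: j S => [|j IH] S.
  rewrite ffactn0; apply/eqP; apply/cards1P; exists set0; apply/setP => X.
  rewrite !inE; apply/idP/idP => [/and3P [_ /eqP /cards0_eq -> _] //|/eqP ->].
  rewrite cards0 eqxx /= /elems imset0 sub0set andbT; apply/andP; split; apply/forallP.
    by move=> x; rewrite (_ : [set i | (x, i) \in set0] = set0) ?cards0 //; apply/setP => i; rewrite !inE.
  by move=> i; rewrite cards0 ltn0 eq_sym eqbF_neg; apply/negP => /existsP [y]; rewrite inE.
case: (ltnP #|S| j.+1) => hS.
  rewrite ffact_small //; apply/eqP; rewrite cards_eq0; apply/eqP/setP => X.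
  rewrite !inE; apply/negP => /and3P [hX /eqP hc hsub].
  by move: (subset_leq_card hsub); rewrite card_elems // hc leqNgt hS.
have hjn : j < n by apply: leq_trans hS _; apply: leq_trans (max_card _) _; rewrite card_ord.
rewrite (lst_split S (Ordinal hjn)) /=.
rewrite (eq_bigr (fun _ => #|S|.-1 ^_ j)); last first.
  move=> x xS; rewrite (lst_fiber (Ordinal hjn) xS) /= IH.
  by rewrite (cardsD1 x S) xS add1n.
by rewrite sum_nat_const ffactnS.
Qed.


Variable R : pred nat.

Definition lp (S : {set 'I_n}) k : {set {set {set T}}} :=
  [set P : {set {set T}} |
    [&& #|P| == k,
        [forall X in P, is_list_on X && R #|X|] &
        [forall x : 'I_n,
           #|[set X in P | [exists i : 'I_n, (x, i) \in X]]| == (x \in S)]]].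

Definition cnt (Q : {set {set T}}) y := #|[set Y in Q | [exists i : 'I_n, (y, i) \in Y]]|.

Lemma cnt_U1 (Q : {set {set T}}) X y : X \notin Q -> cnt (X |: Q) y = ((y \in elems X) + cnt Q y)%N.
Proof.
move=> hXQ; rewrite /cnt (cardsD1 X) !inE eqxx /= in_elems; congr (_ + _)%N.
apply: eq_card => Y; rewrite !inE; case: (eqVneq Y X) => [->|ne] //=.
by rewrite (negPf hXQ).
Qed.

Lemma cnt0 y : cnt set0 y = 0.
Proof. by rewrite /cnt; apply/eqP; rewrite cards_eq0; apply/eqP/setP => Y; rewrite !inE. Qed.

Lemma lp0 (S : {set 'I_n}) : #|lp S 0| = (#|S| == 0).
Proof.
case: (set_0Vmem S) => [->|[x xS]].
  rewrite cards0 eqxx; apply/eqP/cards1P; exists set0; apply/setP => P.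
  rewrite !inE; apply/idP/idP => [/and3P [/eqP /cards0_eq -> _ _] //|/eqP ->].
  rewrite cards0 eqxx /=; apply/andP; split; apply/forallP => x.
    by rewrite inE.
  by have := cnt0 x; rewrite /cnt => ->; rewrite inE.
have -> : (#|S| == 0) = false by apply/negbTE; rewrite -lt0n card_gt0; apply/set0Pn; exists x.
apply/eqP; rewrite cards_eq0; apply/eqP/setP => P; rewrite !inE.
apply/negP => /and3P [/eqP /cards0_eq -> _ /forallP /(_ x)].
by have := cnt0 x; rewrite /cnt => ->; rewrite xS.
Qed.

Lemma lp_fiber (S : {set 'I_n}) k X : is_list_on X -> R #|X| -> elems X \subset S ->
  #|[set P in lp S k.+1 | X \in P]| = #|lp (S :\: elems X) k|.
Proof.
move=> hX hR hsub; set A := [set P in _ | _].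
rewrite -(@card_in_imset _ _ (fun P => P :\ X) A); last first.
  move=> P1 P2; rewrite !inE => /andP [_ h1] /andP [_ h2] e.
  by rewrite -(setD1K h1) -(setD1K h2) e.
apply: eq_card => P'; apply/imsetP/idP => [[P]|hP'].
  rewrite !inE => /andP [/and3P [/eqP hc hall /forallP hcnt] hXP] ->.
  apply/and3P; split.
  - by move: hc; rewrite (cardsD1 X) hXP add1n => -[->].
  - by apply/forall_inP => Y; rewrite !inE => /andP [_ /(forall_inP hall)].
  apply/forallP => y; have := hcnt y.
  rewrite -[#|[set _ in P | _]|]/(cnt P y) -{1}(setD1K hXP) cnt_U1 ?setD11 //.
  rewrite /cnt !inE; case: (boolP (y \in elems X)) => hy /=.
    by rewrite (subsetP hsub _ hy) add1n eqSS.
  by rewrite add0n.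
move: hP'; rewrite !inE => /and3P [/eqP hc hall /forallP hcnt].
have hXP' : X \notin P'.
  apply/negP => hin; move: hX; rewrite is_list_onE card_gt0 => /andP [/set0Pn [[a i] hai] _].
  have := hcnt a; rewrite !inE (_ : a \in elems X) /=; last by apply/imsetP; exists (a, i).
  rewrite eqn0Ngt card_gt0; apply/negP/negPn/set0Pn; exists X; rewrite !inE hin /=.
  by apply/existsP; exists i.
exists (X |: P'); last by rewrite setU1K.
rewrite /A inE setU11 andbT inE; apply/and3P; split.
- by rewrite cardsU1 hXP' hc.
- apply/forall_inP => Y; rewrite !inE => /orP [/eqP -> |hY]; first by rewrite hX hR.
  exact: (forall_inP hall).
apply/forallP => y; have := hcnt y.
rewrite -[#|[set _ in P' | _]|]/(cnt P' y) -[#|[set _ in X |: P' | _]|]/(cnt (X |: P') y).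
rewrite cnt_U1 // !inE; case: (boolP (y \in elems X)) => hy /=.
  by move=> /eqP ->; rewrite (subsetP hsub _ hy).
by rewrite add0n.
Qed.


Definition valid (S : {set 'I_n}) :=
  [set X : {set T} | [&& is_list_on X, R #|X| & elems X \subset S]].

Lemma sum_bool_card' (I : finType) (b : pred I) :
  (\sum_i (b i : nat))%N = #|[set i | b i]|.
Proof.
rewrite -sum1_card big_mkcond [RHS]big_mkcond /=; apply: eq_bigr => i _.
by rewrite !inE; case: (b i).
Qed.

Lemma lp_double (S : {set 'I_n}) k :
  (#|lp S k.+1| * k.+1 = \sum_(X in valid S) #|lp (S :\: elems X) k|)%N.
Proof.
transitivity (\sum_(P in lp S k.+1) #|P|)%N.
  rewrite -sum_nat_const; apply: eq_bigr => P; rewrite inE => /and3P [/eqP -> _ _] //.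
transitivity (\sum_(P in lp S k.+1) \sum_(X : {set T}) ((X \in P) : nat))%N.
  apply: eq_bigr => P _; rewrite sum_bool_card'; apply: eq_card => X; by rewrite inE.
rewrite exchange_big /= [RHS]big_mkcond /=; apply: eq_bigr => X _.
rewrite sum_bool_card; case: (boolP (X \in valid S)) => hv.
  move: hv; rewrite inE => /and3P [h1 h2 h3]; exact: lp_fiber.
apply/eqP; rewrite cards_eq0; apply/eqP/setP => P; rewrite !inE.
apply/negP => /andP [/and3P [_ hall /forallP hcnt] hXP]; case/negP: hv.
rewrite inE; move/forall_inP: hall => /(_ X hXP) /andP [-> ->] /=.
apply/subsetP => y hy; have := hcnt y.
case: (boolP (y \in S)) => // _; rewrite eqn0Ngt card_gt0 => /negP []; apply/set0Pn.
by exists X; rewrite !inE hXP -in_elems hy.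
Qed.


Local Open Scope ring_scope.

Lemma sum_ext_zero' (F : nat -> rat) a b : (forall k, (a <= k)%N -> F k = 0) ->
  \sum_(k < a) F k = \sum_(k < a + b) F k.
Proof.
move=> h; elim: b => [|b IH]; first by rewrite addn0.
by rewrite addnS big_ord_recr /= -IH h ?leq_addr // addr0.
Qed.

Lemma sum_pick (G : nat -> rat) a : (a <= n)%N ->
  \sum_(j < n.+1) ((a == j)%:R * G j) = G a.
Proof.
move=> han; rewrite (bigD1 (inord a)) //= inordK ?ltnS // eqxx mul1r big1 ?addr0 //.
move=> j hj; case: (eqVneq a j) => [eaj|]; last by rewrite mul0r.
by case/negP: hj; apply/eqP/val_inj; rewrite /= inordK ?ltnS // eaj.
Qed.

Lemma valid_size (S : {set 'I_n}) j :
  #|[set X in valid S | #|X| == j]| = (((0 < j)%N && R j) * #|lst S j|)%N.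
Proof.
case: (boolP ((0 < j)%N && R j)) => hj /=.
  rewrite mul1n; apply: eq_card => X; rewrite !inE is_list_onE.
  apply/idP/idP => [/andP [/and3P [/andP [_ ->] _ ->] ->] //|/and3P [h1 /eqP h2 h3]].
  by rewrite h1 h2 h3 eqxx !andbT; case/andP: hj => -> ->.
rewrite mul0n; apply/eqP; rewrite cards_eq0; apply/eqP/setP => X; rewrite !inE is_list_onE.
apply/negP => /andP [/and3P [/andP [h0 _] hR _] /eqP hc]; case/negP: hj.
by rewrite -hc h0 hR.
Qed.

Lemma lp_formula (f : {poly rat}) : f`_0 = 0 -> (forall j, (0 < j)%N -> f`_j = (R j)%:R) ->
  forall k (S : {set 'I_n}), (#|lp S k|)%:R * (k`!)%:R = (#|S|`!)%:R * (f ^+ k)`_#|S| :> rat.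
Proof.
move=> hf0 hfj.
have hfj' : forall j, f`_j = ((0 < j)%N && R j)%:R by case=> [|j]; [rewrite hf0 | rewrite hfj].
elim=> [|k IH] S.
  rewrite lp0 expr0 coef1 fact0 mulr1; case: eqP => [->|_]; first by rewrite fact0 mul1r.
  by rewrite mulr0.
have hS : (#|S| <= n)%N by apply: leq_trans (max_card _) _; rewrite card_ord.
set s := #|S|.
set F := fun j => ((s - j)`!)%:R * (f ^+ k)`_(s - j) : rat.
transitivity (\sum_(X in valid S) F #|X|).
  rewrite factS natrM mulrA -natrM lp_double natr_sum mulr_suml; apply: eq_bigr => X.
  rewrite inE => /and3P [hX _ hsub]; rewrite IH /F; congr (_%:R * _); last congr (_`_ _);
    rewrite cardsD (setIidPr hsub) card_elems //; by case/andP: hX.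
transitivity (\sum_(X in valid S) \sum_(j < n.+1) ((#|X| == j)%:R * F j)).
  apply: eq_bigr => X; rewrite inE => /and3P [hX _ _]; rewrite sum_pick //.
  by apply: card_list_le; case/andP: hX.
rewrite exchange_big /=.
transitivity (\sum_(j < n.+1) (((0 < j)%N && R j)%:R * (s ^_ j)%:R * F j)).
  apply: eq_bigr => j _; rewrite -mulr_suml -natr_sum sum_bool_card valid_size card_lst natrM.
  by [].
rewrite exprS coefM mulr_sumr.
have -> : n.+1 = (s.+1 + (n - s))%N by rewrite addSn subnKC.
rewrite -(@sum_ext_zero' (fun j => ((0 < j)%N && R j)%:R * (s ^_ j)%:R * F j) s.+1 (n - s)); last first.
  by move=> j hj; rewrite ffact_small // mulr0 mul0r.
apply: eq_bigr => j _; rewrite hfj' /F -mulrA mulrA [_ * (s ^_ j)%:R]mulrC -!mulrA mulrA -natrM.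
have e : (s ^_ j * (s - j)`!)%N = s`! by rewrite ffact_fact // -ltnS.
by rewrite -e !natrM; ring.
Qed.

End Comb.

Local Open Scope ring_scope.
Lemma Lnk_formula (R : pred nat) (f : {poly rat}) n k :
  f`_0 = 0 -> (forall j, (0 < j)%N -> f`_j = (R j)%:R) ->
  ((Lnk R n k)%:R * (k`!)%:R = (n`!)%:R * (f ^+ k)`_n :> rat)%R.
Proof.
move=> h0 hj; have := lp_formula h0 hj k [set: 'I_n]; rewrite cardsT card_ord => <-.
congr (_%:R * _)%R; rewrite /Lnk; apply: eq_card => P; rewrite !inE.
do 2 congr andb; apply: eq_forallb => x; by rewrite in_setT.
Qed.

End CombM.
Import CombM.

Local Open Scope ring_scope.



Lemma sum_ext_zero (F : nat -> rat) a b : (forall k, (a <= k)%N -> F k = 0) ->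
  \sum_(k < a) F k = \sum_(k < a + b) F k.
Proof.
move=> h; elim: b => [|b IH]; first by rewrite addn0.
by rewrite addnS big_ord_recr /= -IH h ?leq_addr // addr0.
Qed.

Lemma eqm_pow0 q k : eqm 1 q 0 -> eqm k (q ^+ k) 0.
Proof.
case=> s; rewrite subr0 expr1 => ->; exists (s ^+ k); by rewrite subr0 exprMn.
Qed.

Lemma sum_comp (p q : {poly rat}) (B i : nat) : eqm 1 q 0 -> (i < B)%N ->
  (p \Po q)`_i = \sum_(k < B) p`_k * (q ^+ k)`_i.
Proof.
move=> hq hiB; rewrite coef_comp_poly.
rewrite (sum_ext_zero (fun k => p`_k * (q ^+ k)`_i) (size p) B); last first.
  by move=> k hk; rewrite nth_default // mul0r.
rewrite (sum_ext_zero (fun k => p`_k * (q ^+ k)`_i) B (size p)); last first.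
  move=> k hk; rewrite (eqm_coef _ _ _ i (eqm_pow0 _ k hq)) ?coef0 ?mulr0 //.
  exact: leq_trans hiB hk.
by rewrite addnC.
Qed.

Lemma comp_polyXn_exp (p q : {poly rat}) k : (p ^+ k) \Po q = (p \Po q) ^+ k.
Proof.
elim: k => [|k IH]; first by rewrite !expr0 comp_polyC.
by rewrite !exprS comp_polyM IH.
Qed.

Lemma key_sum (f g : {poly rat}) m i j : eqm 1 g 0 ->
  eqm m.+2 (f \Po g) 'X -> (i <= m)%N -> (j <= m)%N ->
  \sum_(k < m.+1) (g ^+ k.+1)`_i.+1 * (f ^+ j.+1)`_k.+1 = (i == j)%:R.
Proof.
move=> hg hfg hi hj.
have := sum_comp (f ^+ j.+1) g m.+2 i.+1 hg; rewrite ltnS ltnS => /(_ hi).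
rewrite big_ord_recl /= expr0 coefC /= mulr0 add0r => H.
transitivity (\sum_(k < m.+1) (f ^+ j.+1)`_(bump 0 k) * (g ^+ bump 0 k)`_i.+1).
  by apply: eq_bigr => k _; rewrite mulrC.
rewrite -H.
rewrite comp_polyXn_exp (eqm_coef _ _ _ _ (eqm_exp _ _ _ j.+1 hfg)) ?ltnS //.
by rewrite coefXn eqSS.
Qed.

Lemma fact_neq0 n : (n`!)%:R != 0 :> rat.
Proof. by rewrite pnatr_eq0 -lt0n fact_gt0. Qed.

Lemma Rset_coef r j : (2 <= r)%N -> (0 < j)%N ->
  ('X + 'X^2 + 'X^(r.+1) + 'X^(r.+2) : {poly rat})`_j = (Rset r j)%:R.
Proof.
move=> hr hj; rewrite /Rset !inE !coefD coefX !coefXn -!natrD; congr (_%:R).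
case: (j =P 1) => h1; case: (j =P 2) => h2; case: (j =P r.+1) => h3; case: (j =P r.+2) => h4 /=; lia.
Qed.

Theorem mainTheorem9 (r n k : nat) :
  (2 <= r)%N -> (1 <= n)%N -> (1 <= k)%N ->
  0 <= (-1) ^+ (n - k) * Linv (Rset r) n k.
Proof.
move=> hr hn hk; rewrite /Linv hk /=.
case: (leqP k n) => hkn; last by rewrite mulr0.
set f : {poly rat} := 'X + 'X^2 + 'X^(r.+1) + 'X^(r.+2).
have hf0 : f`_0 = 0 by rewrite !coefD coefX !coefXn /= !addr0.
have hfj : forall j, (0 < j)%N -> f`_j = (Rset r j)%:R by move=> j; apply: Rset_coef.
case: n hn hkn => [//|m] _ hkn; rewrite [m.+1.-1]/=.
have [g [hgn hg0 hfg]] := exists_g r m.+2 (leq_trans (isT : (0 < 2)%N) hr).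
have hfg' : eqm m.+2 (f \Po g) 'X.
  by rewrite /f !comp_polyD comp_polyX !comp_Xn_poly.
set Lm := Lmat (Rset r) m.
set Mm : 'M[rat]_m.+1 :=
  \matrix_(i, k) ((i.+1)`!%:R / (k.+1)`!%:R * (g ^+ k.+1)`_i.+1).
have hML : Mm *m Lm = 1%:M.
  apply/matrixP => i j; rewrite !mxE.
  transitivity (\sum_(k < m.+1) (i.+1)`!%:R / (j.+1)`!%:R *
      ((g ^+ k.+1)`_i.+1 * (f ^+ j.+1)`_k.+1)).
    apply: eq_bigr => l _; rewrite !mxE.
    have := @Lnk_formula (Rset r) f l.+1 j.+1 hf0 hfj.
    move/(congr1 (fun x => x / (j.+1)`!%:R)); rewrite mulfK ?fact_neq0 // => ->.
    by field; rewrite !fact_neq0.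
  have hi : (i <= m)%N by rewrite -ltnS.
  have hj : (j <= m)%N by rewrite -ltnS.
  rewrite -mulr_sumr (key_sum _ _ _ _ _ hg0 hfg' hi hj).
  case: (eqVneq i j) => [->|hij]; last by rewrite (_ : (val i == val j) = false) ?mulr0 //; apply/negbTE.
  by rewrite eqxx mulr1 divff ?fact_neq0.
have [uM uL] := mulmx1_unit hML.
have hinv : invmx Lm = Mm.
  by rewrite -[invmx Lm]mulmx1 -(mulmx1C hML) mulKmx.
rewrite hinv mxE !inordK //; last by rewrite -(prednK hk) in hkn.
rewrite prednK // mulrCA; apply: mulr_ge0; first by apply: divr_ge0; apply: ler0n.
have := nnCX _ k hgn m.+1.
have -> : (- g) ^+ k = ((-1) ^+ k)%:P * g ^+ k.
  by rewrite [LHS]exprNn polyC_exp polyCN polyC1.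
rewrite coefCM mulrA -exprD.
have -> : (m.+1 + k = (m.+1 - k) + k.*2)%N by rewrite -addnn addnA subnK.
by rewrite exprD -[(-1) ^+ k.*2]signr_odd odd_double mulr1.
Qed.
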